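(* Let $\mathcal I$ be a canonical instance and run Algorithm 1 (described below) on it. At every moment of the run, every agent $a_{i,j}$ satisfies $v_{i,j}(A_{i,j})\le 3w_i$; in particular the final bundles satisfy $v_{i,j}(A_{i,j})\le 3w_i$. (Algorithm 1: start with empty bundles and all agents present; for $h=1,\dots,m$: let $\mathcal N_h$ be the present agents $a_{i,j}$ with $v_{i,j}(e_h)\le w_i$; give $e_h$ to an agent of $\mathcal N_h$ minimizing $v_{i,j}(e_h)$, ties broken in favor of the smallest weight and then arbitrarily; if the receiver now has $v_{i,j}(A_{i,j})\ge 3w_i$, she is removed from the present agents.)
   Context: Chore-allocation instance: agents, a finite set $\mathcal M=\{e_1,\dots,e_m\}$ of indivisible items, positive weights, additive cost functions $v:2^{\mathcal M}\to\mathbb R_{\ge0}$. The weighted maximin share of agent $a$ with weight $w_a$ and cost $v_a$ is $\mathsf{WMMS}_a=w_a\min_{\text{allocations }(B_b)_b}\max_{b}\frac{v_a(B_b)}{w_b}$, allocations being ordered partitions of $\mathcal M$ into one (possibly empty) bundle per agent. An instance is canonical if: (i) $\max$ weight is $w_1$, weights sum to $1$, and every weight equals $w_1/2^p$ for some nonnegative integer $p$; (ii) every agent's total cost $v(\mathcal M)=1$, and every single-item cost is either $0$ or $w_1/2^p$ for some nonnegative integer $p$; (iii) every agent has $v(e_1)\ge\cdots\ge v(e_m)$; (iv) every agent's $\mathsf{WMMS}$ equals her weight. Agents are partitioned into groups $G_1,\dots,G_k$ by weight, all agents of $G_i$ having weight $w_i$, with $w_1>\cdots>w_k$; $G_i=\{a_{i,1},\dots,a_{i,n_i}\}$,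 and $v_{i,j},A_{i,j}$ denote the cost function and current bundle of $a_{i,j}$. *)

(* Defs.v *)
From mathcomp Require Import all_boot all_order all_algebra.
Set Implicit Arguments. Unset Strict Implicit. Unset Printing Implicit Defensive.
Import Order.TTheory GRing.Theory Num.Theory.
Local Open Scope ring_scope.

(* Agents are 'I_n, items e_1,...,e_m are 'I_m (item e_{k+1} is the ordinal k).
   Weights w : 'I_n -> R, additive costs given by item costs v a e. *)

Section Defs.
Variables (R : realFieldType) (n m : nat).
Variables (w : 'I_n -> R) (v : 'I_n -> 'I_m -> R).

Definition cost (a : 'I_n) (B : {set 'I_m}) : R := \sum_(e in B) v a e.

Definition fmin (s : seq R) : R := foldr Num.min (head 0 s) s.

(* an allocation = ordered partition of the items into one (possibly empty)
   bundle per agent, i.e. an assignment of each item to an agent *)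
Definition alloc_bundle (f : {ffun 'I_m -> 'I_n}) (b : 'I_n) : {set 'I_m} :=
  [set e | f e == b].

(* max_b v_a(B_b)/w_b  (costs are nonnegative, so max with 0 is the max) *)
Definition wmms_val (a : 'I_n) (f : {ffun 'I_m -> 'I_n}) : R :=
  \big[Num.max/0]_(b : 'I_n) (cost a (alloc_bundle f b) / w b).

Definition WMMS (a : 'I_n) : R :=
  w a * fmin [seq wmms_val a f | f <- enum {: {ffun 'I_m -> 'I_n}}].

Definition canonical_instance : Prop :=
  (forall a, 0 < w a) /\
  (exists w1 : R,
     (exists a1, w a1 = w1) /\
     (forall a, w a <= w1) /\
     (\sum_(a : 'I_n) w a = 1) /\
     (forall a, exists p : nat, w a = w1 / 2 ^+ p) /\
     (forall a, cost a [set: 'I_m] = 1) /\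
     (forall a e, v a e = 0 \/ exists p : nat, v a e = w1 / 2 ^+ p)) /\
  (forall a (e e' : 'I_m), (e <= e')%N -> v a e' <= v a e) /\
  (forall a, WMMS a = w a).

(* A (partial) run of Algorithm 1 is described by h, the number of items
   e_1..e_h already handed out, and rec : 'I_m -> 'I_n, where rec k is the
   agent receiving item k (only the values rec k, k < h, are relevant). *)
Variable rec : 'I_m -> 'I_n.

Definition bundle (t : nat) (a : 'I_n) : {set 'I_m} :=
  [set e : 'I_m | (e < t)%N && (rec e == a)].

Definition present (t : nat) (a : 'I_n) : bool :=
  [forall k : 'I_m, ((k < t)%N && (rec k == a)) ==>
                    (cost a (bundle k.+1 a) < 3 * w a)].

Definition Ncand (k : 'I_m) : {set 'I_n} :=
  [set b | present k b && (v b k <= w b)].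

Definition valid_step (k : 'I_m) : Prop :=
  rec k \in Ncand k /\
  (forall b, b \in Ncand k -> v (rec k) k <= v b k) /\
  (forall b, b \in Ncand k -> v b k = v (rec k) k -> w (rec k) <= w b).

Definition valid_run (h : nat) : Prop :=
  (h <= m)%N /\ forall k : 'I_m, (k < h)%N -> valid_step k.

End Defs.

(* Main.v *)
Require Import Defs.
From mathcomp Require Import all_boot all_order all_algebra.
From mathcomp Require Import ring lra.
Import Order.TTheory GRing.Theory Num.Theory.
Set Implicit Arguments. Unset Strict Implicit.
Local Open Scope ring_scope.
Lemma pow2_mult (R : realFieldType) (w1 : R) p q : (p <= q)%N ->
  w1 / 2^+p = w1 / 2^+q * (2^(q-p))%:R.
Proof.
move=> le; rewrite -(subnKC le) addKn exprD natrX.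
have h2 : (2:R)^+p != 0 by rewrite expf_neq0 // pnatr_eq0.
have h3 : (2:R)^+(q-p) != 0 by rewrite expf_neq0 // pnatr_eq0.
field; by rewrite h2 h3.
Qed.

Lemma pow2_le (R : realFieldType) (w1 : R) p q : 0 < w1 ->
  w1 / 2^+q <= w1 / 2^+p -> (p <= q)%N.
Proof.
move=> w0 H; case: (leqP p q) => // lt.
have := pow2_mult w1 (ltnW lt); move=> E.
move: H; rewrite E.
have pos : 0 < w1 / 2^+p by rewrite divr_gt0 // exprn_gt0.
rewrite ger_pMr // -[X in _ <= X]/(1%:R) ler_nat leqNgt.
have : (1 < 2 ^ (p - q))%N by rewrite -{1}(expn0 2) ltn_exp2l // subn_gt0.
by move=> ->.
Qed.

Lemma mult_of (R : realFieldType) (w1 c x : R) q : 0 < w1 -> c = w1 / 2^+q ->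
  (x = 0 \/ exists p : nat, x = w1 / 2^+p) -> c <= x -> exists N : nat, x = c * N%:R.
Proof.
move=> w0 -> [->|[p ->]] le; first by exists 0%N; rewrite mulr0.
exists (2^(q-p))%N; apply: pow2_mult; exact: pow2_le le.
Qed.
Section Main.
Variables (R : realFieldType) (n m : nat).
Variables (w : 'I_n -> R) (v : 'I_n -> 'I_m -> R) (rec : 'I_m -> 'I_n).

Lemma bundle0 a : bundle rec 0 a = set0.
Proof. by apply/setP => e; rewrite !inE. Qed.

Lemma bundle_big t a : (m <= t)%N -> bundle rec t.+1 a = bundle rec t a.
Proof.
move=> mt; apply/setP => e; rewrite !inE.
by rewrite (leq_trans (ltn_ord e) mt) (leq_trans (ltn_ord e) (leqW mt)).
Qed.

Lemma bundle_no t a (tm : (t < m)%N) : rec (Ordinal tm) != a ->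
  bundle rec t.+1 a = bundle rec t a.
Proof.
move=> ne; apply/setP => e; rewrite !inE ltnS leq_eqVlt.
case: eqP => //= et; have -> : e = Ordinal tm by apply: val_inj.
by rewrite (negbTE ne) ltnn.
Qed.

Lemma bundle_yes t a (tm : (t < m)%N) : rec (Ordinal tm) = a ->
  bundle rec t.+1 a = Ordinal tm |: bundle rec t a.
Proof.
move=> ya; apply/setP => e; rewrite !inE ltnS leq_eqVlt.
case: (boolP (e == Ordinal tm)) => [/eqP ->|ne] /=; first by rewrite eqxx ya eqxx.
have -> : (nat_of_ord e == t) = false.
  by apply/negbTE; apply: contra ne => /eqP et; apply/eqP/val_inj.
by [].
Qed.

Lemma present_le t a : present w v rec t.+1 a -> present w v rec t a.
Proof.
move=> /forallP P; apply/forallP => k; apply/implyP => /andP [kt ka].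
have := P k; rewrite ltnS (ltnW kt) ka; exact.
Qed.

Lemma present_bound a : 0 < w a -> forall t,
  present w v rec t a -> cost v a (bundle rec t a) < 3 * w a.
Proof.
move=> wa; elim=> [|t IH] pr.
  by rewrite bundle0 /cost big_set0; lra.
case: (ltnP t m) => [tm|mt]; last by rewrite bundle_big //; apply: IH; apply: present_le.
case: (boolP (rec (Ordinal tm) == a)) => [ya|na]; last first.
  by rewrite bundle_no //; apply: IH; apply: present_le.
move/forallP: pr => /(_ (Ordinal tm)) /implyP; apply; by rewrite /= ltnSn.
Qed.


Lemma main_bound h : canonical_instance w v -> valid_run w v rec h ->
  forall a t, (t <= h)%N -> cost v a (bundle rec t a) <= 3 * w a.
Proof.
move=> [wpos [[w1 [[a1 Ha1] [_ [_ [wpow [_ vpow]]]]]] [mono _]]] [hm vr] a.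
have w10 : 0 < w1 by rewrite -Ha1.
have wa := wpos a.
elim=> [|t IH] th.
  by rewrite bundle0 /cost big_set0; lra.
have IH' := IH (ltnW th).
case: (ltnP t m) => [tm|mt]; last by rewrite bundle_big.
case: (boolP (rec (Ordinal tm) == a)) => [/eqP ya|na]; last by rewrite bundle_no.
have [inN _] := vr (Ordinal tm) th.
move: inN; rewrite inE ya => /andP [pr vw].
have lt := present_bound wa pr.
rewrite bundle_yes // /cost big_setU1 /=; last by rewrite inE ltnn.
rewrite -/(cost v a _) in lt *.
set c := v a (Ordinal tm) in vw *.
have [c0|[q cq]] := vpow a (Ordinal tm).
  rewrite -/c in c0; rewrite c0; lra.
rewrite -/c in cq.
have cpos : 0 < c by rewrite cq divr_gt0 // exprn_gt0.
have [M HM] : exists M : nat, w a = c * M%:R.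
  apply: (mult_of w10 cq) => //; right; exact: wpow.
have [N HN] : exists N : nat, cost v a (bundle rec t a) = c * N%:R.
  rewrite /cost; apply: (big_ind (fun x => exists N : nat, x = c * N%:R)).
  - by exists 0%N; rewrite mulr0.
  - by move=> x y [N1 ->] [N2 ->]; exists (N1 + N2)%N; rewrite natrD mulrDr.
  move=> e; rewrite inE => /andP [et _].
  apply: (mult_of w10 cq); first exact: vpow.
  by apply: mono; apply: ltnW.
rewrite HN HM in lt *.
have E : c * (3 * M)%:R = 3 * (c * M%:R) by rewrite natrM; ring.
have E2 : c * (N.+1)%:R = c + c * N%:R by rewrite -addn1 natrD; ring.
rewrite -E -E2 ler_pM2l // ler_nat.
by rewrite -E ltr_pM2l // ltr_nat in lt.
Qed.

End Main.

Theorem mainTheorem8 (R : realFieldType) (n m : nat)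
  (w : 'I_n -> R) (v : 'I_n -> 'I_m -> R) (rec : 'I_m -> 'I_n) (h : nat) :
  canonical_instance w v ->
  valid_run w v rec h ->
  forall a : 'I_n, cost v a (bundle rec h a) <= 3 * w a.
Proof.
move=> C V a; exact: (main_bound C V a (leqnn h)).
Qed.
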